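(* Let $b\ge1$, $k\ge 0$. For $S\in\mathrm{SYT}^{+k}((b,b))$ define the path $\beta(S)$ of length $2b+k$ whose $j$-th step ($j\in[2b+k]$) is: an up step $U$ if $j$ is the minimum of the set in some top-row cell; a down step $D$ if $j$ is the minimum of the set in some bottom-row cell; an umber horizontal step if $j$ is a non-minimal element of a top-row cell; a denim horizontal step if $j$ is a non-minimal element of a bottom-row cell. Then $\beta$ is a bijection from $\mathrm{SYT}^{+k}((b,b))$ onto the set of paths in $\mathrm{Motz}^{\{1,2\}}(2b+k)$ having exactly $k$ horizontal steps.
   Context: $\mathrm{SYT}^{+k}(\lambda)$: for a partition $\lambda$ of $N$ and $k\ge 0$, the set of fillings of the cells of $\lambda$ by nonempty sets of positive integers forming a set partition of $[N+k]$, with $\max S(u)<\min S(v)$ whenever $u\ne v$ and $u$ is weakly northwest of $v$. A bicolored Motzkin path of length $n$ is a lattice path from $(0,0)$ to $(n,0)$ with steps $U=(1,1)$, $D=(1,-1)$ and horizontal steps $(1,0)$, each horizontal step colored either umber ($u$) or denim ($d$), never going below the $x$-axis. $\mathrm{Motz}^{\{1,2\}}(n)$ is the set of such paths satisfying both: (1) no umber step occurs at height $0$; (2) no denim step occurs before the first down step. *)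

(* Defs.v *)
From mathcomp Require Import all_boot all_order all_algebra.
Set Implicit Arguments. Unset Strict Implicit. Unset Printing Implicit Defensive.
Import GRing.Theory Num.Theory.

(* Conventions: the positive integer i+1 in [N+k] is represented by the
   ordinal i : 'I_(N+k).  A cell of the shape (b,b) is a pair
   (r, c) : 'I_2 * 'I_b, r = 0 the top row, r = 1 the bottom row. *)

Definition cell (b : nat) := ('I_2 * 'I_b)%type.

Definition weakNW (b : nat) (u v : cell b) : bool :=
  (u.1 <= v.1)%N && (u.2 <= v.2)%N.

Definition is_SYTk (b k : nat) (S : {ffun cell b -> {set 'I_(2 * b + k)}}) : Prop :=
  (forall u, S u != set0) /\
  (forall u v, u != v -> [disjoint S u & S v]) /\
  (forall j : 'I_(2 * b + k), exists u, j \in S u) /\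
  (forall u v, u != v -> weakNW u v ->
     forall x y, x \in S u -> y \in S v -> (x < y)%N).

Inductive step := U | D | Hu | Hd.

Definition isD (s : step) : bool := if s is D then true else false.
Definition isHu (s : step) : bool := if s is Hu then true else false.
Definition isHd (s : step) : bool := if s is Hd then true else false.
Definition isH (s : step) : bool := isHu s || isHd s.

Definition delta (s : step) : int :=
  match s with U => 1%R | D => (-1)%R | _ => 0%R end.

Definition height (p : seq step) : int := (\sum_(s <- p) delta s)%R.

Definition is_motzkin (n : nat) (p : seq step) : Prop :=
  size p = n /\
  (forall i, (i <= size p)%N -> (0 <= height (take i p))%R) /\
  height p = 0%R.

Definition is_motz12 (n : nat) (p : seq step) : Prop :=
  is_motzkin n p /\
  (forall i, (i < size p)%N -> isHu (nth U p i) -> height (take i p) != 0%R) /\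
  (forall i, (i < size p)%N -> isHd (nth U p i) -> has isD (take i p)).

Definition is_min_of n (A : {set 'I_n}) (j : 'I_n) : bool :=
  (j \in A) && [forall i in A, (j <= i)%N].

Definition beta_step (b k : nat) (S : {ffun cell b -> {set 'I_(2 * b + k)}})
  (j : 'I_(2 * b + k)) : step :=
  match [pick u | j \in S u] with
  | Some u =>
      if u.1 == 0 :> nat then (if is_min_of (S u) j then U else Hu)
      else (if is_min_of (S u) j then D else Hd)
  | None => U
  end.

Definition beta (b k : nat) (S : {ffun cell b -> {set 'I_(2 * b + k)}}) : seq step :=
  [seq beta_step S j | j <- enum 'I_(2 * b + k)].

(* Main.v *)
Require Import Defs.
From mathcomp Require Import all_boot all_order all_algebra.
From mathcomp Require Import zify.
Set Implicit Arguments. Unset Strict Implicit. Unset Printing Implicit Defensive.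
Import GRing.Theory Num.Theory.

Definition isU (s : step) : bool := if s is U then true else false.
Definition startr (r : nat) (s : step) : bool := if r == 0 then isU s else isD s.
Definition rowS (s : step) : nat := match s with U | Hu => 0 | _ => 1 end.
Definition cnt (P : pred step) (p : seq step) i := count P (take i p).

Lemma cnt_succ P p i : cnt P p i.+1 = cnt P p i + ((i < size p) && P (nth U p i)).
Proof.
rewrite /cnt; case: (ltnP i (size p)) => h.
  by rewrite (take_nth U h) -cats1 count_cat /= addn0.
by rewrite !take_oversize ?addn0 // ltnW.
Qed.

Lemma cnt0 P p : cnt P p 0 = 0. Proof. by rewrite /cnt take0. Qed.

Lemma cnt_mono P p i j : i <= j -> cnt P p i <= cnt P p j.
Proof.
move=> h; rewrite -(subnKC h); elim: (j - i) => [|d IH]; first by rewrite addn0.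
by rewrite addnS cnt_succ; apply: leq_trans IH (leq_addr _ _).
Qed.

Lemma cnt_IV P p v i : v < cnt P p i ->
  exists j, [/\ j < i, j < size p, P (nth U p j) & cnt P p j = v].
Proof.
elim: i => [|i IH]; first by rewrite cnt0.
rewrite cnt_succ => h.
case: (ltnP v (cnt P p i)) => h2.
  by case: (IH h2) => j [? ? ? ?]; exists j; split=> //; apply: ltnW.
move: h; case: (boolP ((i < size p) && P (nth U p i))) => [/andP[a b]|_] h.
  by exists i; split=> //; lia.
lia.
Qed.

Lemma cnt_size P p : cnt P p (size p) = count P p.
Proof. by rewrite /cnt take_size. Qed.

Lemma height_cnt s : height s = (Posz (count isU s) - Posz (count isD s))%R.
Proof.
elim: s => [|x s IH]; first by rewrite /height big_nil.
rewrite /height big_cons -/(height s) IH; case: x => /=; rewrite ?add0n; lia.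
Qed.

Lemma count_steps s : count isU s + count isD s + count isH s = size s.
Proof. by elim: s => [|x s IH] //=; case: x => /=; lia. Qed.

Lemma card_le_ord (b c : nat) (h : c < b) : #|[set x : 'I_b | x <= c]| = c.+1.
Proof.
have -> : [set x : 'I_b | x <= c] = widen_ord h @: setT.
  apply/setP => x; rewrite inE; apply/idP/imsetP.
    by move=> hx; exists (Ordinal (hx : x < c.+1)) => //; apply: val_inj.
  by case=> y _ ->; rewrite /= -ltnS.
by rewrite card_imset ?cardsT ?card_ord //; by move=> x y /(congr1 val) /= /val_inj.
Qed.

Lemma I2_cases (r : 'I_2) : r = ord0 \/ r = ord_max.
Proof. case: r => [[|[|m]] h]; [left|right|]; try exact: val_inj. by []. Qed.

Section SYT.
Variables (b k : nat) (S : {ffun cell b -> {set 'I_(2 * b + k)}}).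
Hypothesis HS : is_SYTk S.
Local Notation n := (2 * b + k).

Lemma cell_uniq j u v : j \in S u -> j \in S v -> u = v.
Proof.
move=> h1 h2; apply/eqP; apply/negPn/negP => ne.
case: HS => _ [Hd _]; by rewrite (disjointFr (Hd _ _ ne) h1) in h2.
Qed.

Lemma S_ord u v x y : u != v -> weakNW u v -> x \in S u -> y \in S v -> x < y.
Proof. by move=> ne w hx hy; case: HS => _ [_ [_ H]]; exact: (H u v ne w x y hx hy). Qed.

Lemma S_ne u : exists x, x \in S u.
Proof. by case: HS => H _; apply/set0Pn; apply: H. Qed.

Lemma S_cov (j : 'I_n) : exists u, j \in S u.
Proof. by case: HS => _ [_ [H _]]. Qed.

Lemma beta_stepE j u : j \in S u -> beta_step S j =
  if u.1 == 0 :> nat then (if is_min_of (S u) j then U else Hu)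
  else (if is_min_of (S u) j then D else Hd).
Proof.
move=> hj; rewrite /beta_step; case: pickP => [u' hu'|H].
  by rewrite (cell_uniq hu' hj).
by rewrite H in hj.
Qed.

Lemma size_beta : size (beta S) = n.
Proof. by rewrite size_map size_enum_ord. Qed.

Lemma nth_beta (j : 'I_n) : nth U (beta S) j = beta_step S j.
Proof. by rewrite (nth_map j) ?nth_ord_enum // size_enum_ord. Qed.

Lemma startr_beta (r : 'I_2) j u : j \in S u ->
  startr r (beta_step S j) = (u.1 == r) && is_min_of (S u) j.
Proof.
move=> hj; rewrite (beta_stepE hj).
case: (I2_cases r) => ->; case: (I2_cases u.1) => ->;
  by case: (is_min_of _ _).
Qed.

Lemma rowS_beta j u : j \in S u -> rowS (beta_step S j) = u.1.
Proof.
move=> hj; rewrite (beta_stepE hj).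
by case: (I2_cases u.1) => ->; case: (is_min_of _ _).
Qed.

Definition T (r : 'I_2) i :=
  [set c : 'I_b | [exists j : 'I_n, (j < i) && (j \in S (r, c))]].

Lemma T0 r : T r 0 = set0.
Proof. by apply/setP => c; rewrite !inE; apply/existsP; case. Qed.

Lemma mem_T_succ r i (hi : i < n) u : Ordinal hi \in S u ->
  forall c, (c \in T r i.+1) = (c \in T r i) || ((r, c) == u).
Proof.
move=> hj c; rewrite !inE; apply/existsP/orP.
  case=> j /andP[]; rewrite ltnS leq_eqVlt => /orP[/eqP e|lt] hS.
    right; have ej : j = Ordinal hi by apply: val_inj.
    by rewrite ej in hS; apply/eqP; exact: cell_uniq hS hj.
  by left; apply/existsP; exists j; rewrite lt.
case=> [/existsP[j /andP[lt hS]]|/eqP e]; first by exists j; rewrite hS ltnW.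
by exists (Ordinal hi); rewrite /= ltnSn e.
Qed.

Lemma notmin_ex (A : {set 'I_n}) j : j \in A -> ~~ is_min_of A j ->
  exists2 x, x \in A & x < j.
Proof.
rewrite /is_min_of => -> /= /forallPn[x]; rewrite negb_imply => /andP[xa].
by rewrite -ltnNge; exists x.
Qed.

Lemma cnt_T (r : 'I_2) i : i <= n -> cnt (startr r) (beta S) i = #|T r i|.
Proof.
elim: i => [|i IH] hi; first by rewrite cnt0 T0 cards0.
have hi' : i < n by [].
case: (S_cov (Ordinal hi')) => u hu.
rewrite cnt_succ IH ?(ltnW hi) // size_beta hi /=.
rewrite -[i]/(nat_of_ord (Ordinal hi')) nth_beta (startr_beta r hu).
case: (boolP (u.1 == r)) => e /=.
  have Tu : T r i.+1 = u.2 |: T r i.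
    apply/setP => c; rewrite (mem_T_succ r hu) in_setU1 orbC.
    congr (_ || _); case: u hu e => [r' c'] /= hu /eqP ->.
    by rewrite xpair_eqE eqxx.
  rewrite Tu cardsU1 addnC; congr (_ + _).
  case: (boolP (is_min_of _ _)) => m.
    apply/esym/eqP; rewrite eqb1; apply/negP; rewrite inE => /existsP[x /andP[lt hx]].
    move: m; rewrite /is_min_of => /andP[_ /forallP/(_ x)].
    case: u hu e hx {Tu} => [r' c'] /= hu /eqP -> hx; rewrite hx /=.
    by rewrite leqNgt lt.
  case: (notmin_ex hu m) => x hx lt; apply/esym/eqP; rewrite eqb0 negbK inE.
  apply/existsP; exists x; rewrite lt /=.
  by case: u hu e hx {Tu m} => [r' c'] /= hu /eqP ->.
have -> : T r i.+1 = T r i.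
  apply/setP => c; rewrite (mem_T_succ r hu) orbC.
  case: (boolP ((r, c) == u)) => //= /eqP ec; by rewrite -ec eqxx in e.
by rewrite addn0.
Qed.

Lemma T_col (r : 'I_2) (j : 'I_n) (c : 'I_b) : j \in S (r, c) ->
  T r j.+1 = [set x : 'I_b | x <= c].
Proof.
move=> hj; apply/setP => c'; rewrite !inE; apply/existsP/idP.
  case=> x /andP[lt hx]; rewrite leqNgt; apply/negP => gt.
  have : j < x.
    apply: (S_ord _ _ hj hx).
      by rewrite xpair_eqE eqxx /=; apply/eqP => e; rewrite e ltnn in gt.
    by rewrite /weakNW /= leqnn ltnW.
  by rewrite ltnNge -ltnS lt.
rewrite leq_eqVlt => /orP[/eqP e|lt].
  by exists j; rewrite ltnSn /=; have -> : c' = c by apply: val_inj.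
case: (S_ne (r, c')) => x hx; exists x.
rewrite hx andbT ltnS ltnW //.
apply: (S_ord _ _ hx hj).
  by rewrite xpair_eqE eqxx /=; apply/eqP => e; rewrite e ltnn in lt.
by rewrite /weakNW /= leqnn ltnW.
Qed.

Lemma cnt_col (r : 'I_2) (j : 'I_n) (c : 'I_b) : j \in S (r, c) ->
  cnt (startr r) (beta S) j.+1 = c.+1.
Proof. by move=> hj; rewrite cnt_T // (T_col hj) card_le_ord. Qed.

Lemma T_sub i : T ord_max i \subset T ord0 i.
Proof.
apply/subsetP => c; rewrite !inE => /existsP[x /andP[lt hx]].
case: (S_ne (ord0, c)) => y hy; apply/existsP; exists y.
rewrite hy andbT; apply: ltn_trans _ lt; apply: (S_ord _ _ hy hx) => //.
by rewrite /weakNW /= leqnn.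
Qed.

Lemma T_full r : T r n = setT.
Proof.
apply/setP => c; rewrite !inE; case: (S_ne (r, c)) => x hx.
by apply/existsP; exists x; rewrite hx ltn_ord.
Qed.

Lemma cntU_beta i : i <= n -> cnt isU (beta S) i = #|T ord0 i|.
Proof. exact: (cnt_T ord0). Qed.
Lemma cntD_beta i : i <= n -> cnt isD (beta S) i = #|T ord_max i|.
Proof. exact: (cnt_T ord_max). Qed.

Lemma countU_beta : count isU (beta S) = b.
Proof. by rewrite -cnt_size size_beta cntU_beta // T_full cardsT card_ord. Qed.
Lemma countD_beta : count isD (beta S) = b.
Proof. by rewrite -cnt_size size_beta cntD_beta // T_full cardsT card_ord. Qed.

End SYT.

Section Fwd.
Variables (b k : nat) (S : {ffun cell b -> {set 'I_(2 * b + k)}}).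
Hypothesis HS : is_SYTk S.
Local Notation n := (2 * b + k).

Lemma height_beta i : i <= n ->
  height (take i (beta S)) = (Posz #|T S ord0 i| - Posz #|T S ord_max i|)%R.
Proof.
by move=> hi; rewrite height_cnt -/(cnt _ _ _) -/(cnt _ _ _) cntU_beta // cntD_beta.
Qed.

Lemma fwd : is_motz12 n (beta S) /\ count isH (beta S) = k.
Proof.
split; last first.
  have := count_steps (beta S); rewrite countU_beta // countD_beta // size_beta.
  lia.
split.
  split; first exact: size_beta.
  split.
    move=> i; rewrite size_beta => hi; rewrite height_beta // subr_ge0 lez_nat.
    exact/subset_leq_card/T_sub.
  rewrite -(take_size (beta S)) size_beta height_beta // !(T_full HS) subrr //.
split.
  move=> i; rewrite size_beta => hi.
  rewrite -[i]/(nat_of_ord (Ordinal hi)) nth_beta.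
  case: (S_cov HS (Ordinal hi)) => [[r c]] hu.
  rewrite (beta_stepE HS hu) /=.
  case: (I2_cases r) => er; subst r => //=; last by case: (is_min_of _ _).
  case: (boolP (is_min_of _ _)) => // m _.
  rewrite height_beta ?(ltnW hi) // subr_eq0 eqz_nat; apply/negP => /eqP ecard.
  have : T S ord_max i == T S ord0 i by rewrite eqEcard (T_sub HS) /= ecard.
  move/eqP/setP/(_ c); rewrite !inE.
  case: (notmin_ex hu m) => x hx lt.
  have -> : [exists j : 'I_n, (j < i) && (j \in S (ord0, c))].
    by apply/existsP; exists x; rewrite lt hx.
  move/existsP => [y /andP[lty hy]].
  have : Ordinal hi < y.
    by apply: (S_ord HS _ _ hu hy) => //; rewrite /weakNW /= leqnn.
  by rewrite /= ltnNge ltnW.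
move=> i; rewrite size_beta => hi.
rewrite -[i]/(nat_of_ord (Ordinal hi)) nth_beta.
case: (S_cov HS (Ordinal hi)) => [[r c]] hu.
rewrite (beta_stepE HS hu) /=.
case: (I2_cases r) => er; subst r => //=; first by case: (is_min_of _ _).
case: (boolP (is_min_of _ _)) => // m _.
case: (notmin_ex hu m) => x hx lt.
case: (arg_minnP (fun y : 'I_n => y : nat) hx) => y hy ymin.
have ylt : y < i by apply: leq_ltn_trans (ymin _ hx) lt.
apply/(has_nthP U); exists y.
  by rewrite size_take size_beta hi.
rewrite nth_take // nth_beta (beta_stepE HS hy) /=.
suff -> : is_min_of (S (ord_max, c)) y by [].
rewrite /is_min_of; apply/andP; split; first exact: hy.
apply/forallP => z; apply/implyP; apply: ymin.
Qed.

End Fwd.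

Lemma beta_inj (b k : nat) (S1 S2 : {ffun cell b -> {set 'I_(2 * b + k)}}) :
  is_SYTk S1 -> is_SYTk S2 -> beta S1 = beta S2 -> S1 = S2.
Proof.
move=> H1 H2 eb.
have key : forall (Sa Sb : {ffun cell b -> {set 'I_(2 * b + k)}}),
    is_SYTk Sa -> is_SYTk Sb -> beta Sa = beta Sb ->
    forall u j, j \in Sa u -> j \in Sb u.
  move=> Sa Sb Ha Hb e [r c] j hj.
  case: (S_cov Hb j) => [[r' c']] hj'.
  have er : r = r'.
    apply: val_inj; have := rowS_beta Ha hj; have := rowS_beta Hb hj'.
    by rewrite /= -!nth_beta e => -> ->.
  subst r'.
  have ec : c = c'.
    apply: val_inj; apply: succn_inj.
    by rewrite -(cnt_col Ha hj) -(cnt_col Hb hj') e.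
  by subst c'.
apply/ffunP => u; apply/setP => j; apply/idP/idP; [exact: key | exact: key].
Qed.

Lemma startr_rowS (r : 'I_2) s : startr r s -> rowS s = r.
Proof. by case: (I2_cases r) => ->; case: s. Qed.

Lemma startr0 : startr 0 = isU. Proof. by []. Qed.
Lemma startr1 : startr 1 = isD. Proof. by []. Qed.

Section Surj.
Variables (b k : nat) (p : seq step).
Hypothesis Hp : is_motz12 (2 * b + k) p.
Hypothesis Hk : count isH p = k.
Local Notation n := (2 * b + k).

Lemma Lsize : size p = n. Proof. by case: Hp => [[]]. Qed.

Lemma Lheight i : i <= n -> cnt isD p i <= cnt isU p i.
Proof.
move=> hi; case: Hp => [[_ [H _]] _]; have := H i; rewrite Lsize => /(_ hi).
by rewrite height_cnt subr_ge0 lez_nat.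
Qed.

Lemma Lhu i : i < n -> isHu (nth U p i) -> cnt isD p i < cnt isU p i.
Proof.
move=> hi hu; case: Hp => [_ [H _]]; have := H i; rewrite Lsize => /(_ hi hu).
rewrite height_cnt subr_eq0 eqz_nat => ne.
by rewrite ltn_neqAle /cnt eq_sym ne -/(cnt _ _ _) -/(cnt _ _ _) Lheight // ltnW.
Qed.

Lemma Lhd i : i < n -> isHd (nth U p i) -> 0 < cnt isD p i.
Proof.
move=> hi hd; case: Hp => [_ [_ H]]; have := H i; rewrite Lsize => /(_ hi hd).
by rewrite has_count.
Qed.

Lemma LcntU : cnt isU p n = b /\ cnt isD p n = b.
Proof.
case: Hp => [[_ [_ H]] _]; move: H; rewrite height_cnt => /eqP; rewrite subr_eq0 eqz_nat => /eqP e.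
have := count_steps p; rewrite Hk Lsize e -Lsize !cnt_size Lsize e; lia.
Qed.

Lemma Lbound (r : 'I_2) i : cnt (startr r) p i <= b.
Proof.
case: LcntU => e1 e2.
have h : cnt (startr r) p i <= cnt (startr r) p n.
  case: (leqP i n) => hi; first exact: cnt_mono.
  by rewrite /cnt !take_oversize // ?Lsize // ltnW.
by case: (I2_cases r) h => -> /=; rewrite ?e1 ?e2.
Qed.

Lemma Lpos (j : nat) : j < n -> 0 < cnt (startr (rowS (nth U p j))) p j.+1.
Proof.
move=> hj; rewrite cnt_succ Lsize hj /=.
case E: (nth U p j) => /=; rewrite ?addn1 //.
  rewrite addn0 /startr /=; apply: (leq_trans _ (Lhu hj _)); [by [] | by rewrite E].
by rewrite addn0 /startr /=; apply: Lhd; rewrite ?E.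
Qed.

Definition Sp : {ffun cell b -> {set 'I_n}} :=
  [ffun u : cell b => [set j : 'I_n | (rowS (nth U p j) == u.1) &&
                                     (cnt (startr u.1) p j.+1 == u.2.+1)]].

Lemma memS j u : (j \in Sp u) =
  (rowS (nth U p j) == u.1) && (cnt (startr u.1) p j.+1 == u.2.+1).
Proof. by rewrite ffunE inE. Qed.

Lemma rowS_lt s : rowS s < 2. Proof. by case: s. Qed.

Lemma Scov (j : 'I_n) : exists u, j \in Sp u.
Proof.
have h1 := rowS_lt (nth U p j).
have h2 : (cnt (startr (rowS (nth U p j))) p j.+1).-1 < b.
  have := Lpos (ltn_ord j); have := Lbound (Ordinal h1) j.+1 => /=; lia.
exists (Ordinal h1, Ordinal h2); rewrite memS /= eqxx /=.
by have := Lpos (ltn_ord j); lia.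
Qed.

Lemma Sne u : exists x, x \in Sp u.
Proof.
case: u => r c; case: LcntU => e1 e2.
have : c < cnt (startr r) p n by case: (I2_cases r) => -> /=; rewrite ?e1 ?e2.
case/cnt_IV => j [hj _ hs hc].
exists (Ordinal hj); rewrite memS /= (startr_rowS hs) eqxx /=.
by rewrite cnt_succ Lsize hj hs hc addn1.
Qed.

Lemma SYTp : is_SYTk Sp.
Proof.
split; first by move=> u; apply/set0Pn; apply: Sne.
split.
  move=> u v ne; rewrite -setI_eq0; apply/eqP/setP => j; rewrite !inE.
  apply/negP => /andP[]; rewrite !memS => /andP[/eqP r1 /eqP c1] /andP[/eqP r2 /eqP c2].
  have er : u.1 = v.1 by apply: val_inj; exact: (etrans (esym r1) r2).
  have ec : u.2 = v.2.
    by apply: val_inj; apply: succn_inj; rewrite er in c1; exact: (etrans (esym c1) c2).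
  by move: ne; case: u er ec {r1 c1} => ? ?; case: v {r2 c2} => ? ? /= -> ->; rewrite eqxx.
split; first exact: Scov.
move=> [r c] [r' c'] ne /andP[/= lr lc] x y.
rewrite !memS /= => /andP[/eqP rx /eqP cx] /andP[/eqP ry /eqP cy].
case: (ltnP x y) => // yx; exfalso.
case: (I2_cases r) rx cx lr ne => ->; case: (I2_cases r') ry cy => -> //= ry cy rx cx _ ne.
- have ecc : c <> c' by move=> e; subst c'; rewrite eqxx in ne.
  have := cnt_mono isU p (yx : y.+1 <= x.+1); rewrite cx cy.
  have : (c : nat) <> c' by move=> e; apply: ecc; apply: val_inj.
  lia.
- have yx' : y < x by rewrite ltn_neqAle yx andbT; apply/eqP => e; rewrite e rx in ry.
  have hD := cnt_mono isD p (yx' : y.+1 <= x); rewrite cy in hD.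
  move: cx; rewrite cnt_succ Lsize (ltn_ord x) /=.
  case E: (nth U p x) rx => //= _.
    have := Lheight (ltnW (ltn_ord x)); rewrite startr0; lia.
  have := Lhu (ltn_ord x); rewrite E startr0 => /(_ isT); lia.
- have ecc : c <> c' by move=> e; subst c'; rewrite eqxx in ne.
  have := cnt_mono isD p (yx : y.+1 <= x.+1); rewrite cx cy.
  have : (c : nat) <> c' by move=> e; apply: ecc; apply: val_inj.
  lia.
Qed.

Lemma min_start (j : 'I_n) u : j \in Sp u -> is_min_of (Sp u) j = startr u.1 (nth U p j).
Proof.
move=> hj; have := hj; rewrite memS => /andP[/eqP rj /eqP cj].
apply/idP/idP.
  apply: contraLR => ns; apply/negP; rewrite /is_min_of hj /= => /forallP mn.
  move: cj; rewrite cnt_succ Lsize (ltn_ord j) (negbTE ns) andbF addn0 => cj.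
  have : (u.2 : nat) < cnt (startr u.1) p j by rewrite cj.
  case/cnt_IV => m [mj hm hs hc]; rewrite Lsize in hm.
  have hmS : Ordinal hm \in Sp u.
    by rewrite memS /= (startr_rowS hs) eqxx /= cnt_succ Lsize hm hs hc addn1.
  by have := mn (Ordinal hm); rewrite hmS /= leqNgt mj.
move=> st; rewrite /is_min_of hj /=; apply/forallP => x; apply/implyP => hx.
rewrite leqNgt; apply/negP => xj.
move: hx; rewrite memS => /andP[_ /eqP cx].
have := cnt_mono (startr u.1) p (xj : x.+1 <= j).
move: cj; rewrite cnt_succ Lsize (ltn_ord j) st /= cx => /eqP; rewrite addn1 eqSS => /eqP ->; by rewrite ltnn.
Qed.

Lemma beta_Sp : beta Sp = p.
Proof.
apply: (@eq_from_nth _ U); first by rewrite (size_beta Sp) Lsize.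
move=> i; rewrite (size_beta Sp) => hi.
rewrite -[i]/(nat_of_ord (Ordinal hi)) nth_beta.
case: (Scov (Ordinal hi)) => u hu.
rewrite (beta_stepE SYTp hu) (min_start hu).
move: hu; rewrite memS => /andP[/eqP ru _].
case: (I2_cases u.1) ru => -> /=; by case: (nth U p i).
Qed.

End Surj.

Theorem theorem11 (b k : nat) (hb : (1 <= b)%N) :
  (forall S : {ffun cell b -> {set 'I_(2 * b + k)}}, is_SYTk S ->
     is_motz12 (2 * b + k) (beta S) /\ count isH (beta S) = k) /\
  (forall S1 S2 : {ffun cell b -> {set 'I_(2 * b + k)}},
     is_SYTk S1 -> is_SYTk S2 -> beta S1 = beta S2 -> S1 = S2) /\
  (forall p, is_motz12 (2 * b + k) p -> count isH p = k ->
     exists S : {ffun cell b -> {set 'I_(2 * b + k)}}, is_SYTk S /\ beta S = p).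
Proof.
split; first by move=> S HS; exact: fwd HS.
split; first by move=> S1 S2; exact: beta_inj.
move=> p Hp Hk; exists (@Sp b k p); split; [exact: SYTp | exact: beta_Sp].
Qed.
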